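(* Let $\mathcal{F}^*$ be one of $\mathcal{F}^c,\mathcal{F}^{ev},\mathcal{F}^o$, let $\kappa=\kappa(H,\lambda,\alpha)$ be a nonsingular quadratic function in $\mathcal{F}^*$ and let $H_0$ be a direct summand of $H$ such that $\kappa_0:=\kappa|_{H_0}$ is nondegenerate. Then: 1. $H_1:=H_0^\perp=\{v\in H:\lambda(v,v_0)=0\ \forall v_0\in H_0\}$ is a direct summand of $H$; 2. $\kappa_1:=(\kappa|_{H_1})^-$ and $\kappa_0$ are nondegenerate members of $\mathcal{F}^*$; 3. there is an isometry $\theta_\kappa$ of the induced quadratic linking families $\delta^*(\kappa_0)\cong\delta^*(\kappa_1)$; 4. $\kappa$ is isometric to $\kappa_0\cup_{\theta_\kappa}\kappa_1^-$.
   Context: A quadratic function $\kappa(H,\lambda,\alpha)$: $H$ finitely generated free abelian, $\lambda$ symmetric bilinear into $\mathbb{Z}$, $\alpha\in H^*$, $\kappa(v)=\lambda(v,v)+\alpha(v)$; adjoint $\hat\lambda:H\to H^*$; nondegenerate if $\hat\lambda$ injective, nonsingular if bijective; $\kappa^-=\kappa(H,-\lambda,\alpha)$; restriction to a subgroup restricts $\lambda$ and $\alpha$. Families: $\mathcal{F}^c$ characteristic ($\lambda(v,v)+\alpha(v)$ even); $\mathcal{F}^{ev}$: $\lambda$ even; $\mathcal{F}^o$: $\lambda$ even, $\alpha=0$. For nondegenerate $\kappa_i=\kappa(H_i,\lambda_i,\alpha_i)$: $[x]$ is the class in $\mathrm{Cok}\,\hat\lambda_i$; $\lambda_i^{-1}(x,y)=y(v)/r$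 with $rx=\hat\lambda_i(v)$, $r\ne 0$; $q^{ev}(\kappa_i)([x])=\frac12\lambda_i^{-1}(x,x)$ (for $\mathcal{F}^{ev},\mathcal{F}^o$), $q^c(\kappa_i)([x])=\frac12(\lambda_i^{-1}(x,x)+\lambda_i^{-1}(x,\alpha_i))$ (for $\mathcal{F}^c$), mod $\mathbb{Z}$. An isometry $\delta^*(\kappa_0)\cong\delta^*(\kappa_1)$ is an isomorphism $\theta:\mathrm{Cok}\,\hat\lambda_0\to\mathrm{Cok}\,\hat\lambda_1$ with $\theta([\alpha_0])=[\alpha_1]$ and $q^*(\kappa_1)\circ\theta=q^*(\kappa_0)$. For such $\theta$, $\kappa_0\cup_\theta\kappa_1^-$ denotes $\kappa(H',\lambda',\alpha')$ with $H'=\{(x_0,x_1)\in H_0^*\oplus H_1^*:\theta[x_0]=[x_1]\}$, $\lambda'((x_0,x_1),(y_0,y_1))=\lambda_0^{-1}(x_0,y_0)-\lambda_1^{-1}(x_1,y_1)$, $\alpha'=\hat\lambda'((\alpha_0,\alpha_1))$. *)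

(* Defs.v *)
(* Quadratic functions on finitely generated free abelian groups,
   in coordinates: H = Z^n = 'rV[int]_n, H^* = 'rV[int]_n via x(v) = v *m x^T. *)
From HB Require Import structures.
From mathcomp Require Import all_boot all_order all_algebra.
Set Implicit Arguments. Unset Strict Implicit. Unset Printing Implicit Defensive.
Import Order.TTheory GRing.Theory Num.Theory.
Local Open Scope ring_scope.

(* kappa(H, lambda, alpha) with H = Z^qdim, lambda(v,w) = v L w^T, alpha(v) = v a^T *)
Record qf := QF { qdim : nat; qlam : 'M[int]_qdim; qalpha : 'rV[int]_qdim }.

Definition is_qf (k : qf) : Prop := (qlam k)^T = qlam k.

Definition lam (k : qf) (v w : 'rV[int]_(qdim k)) : int := (v *m qlam k *m w^T) 0 0.
Definition alph (k : qf) (v : 'rV[int]_(qdim k)) : int := (v *m (qalpha k)^T) 0 0.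
Definition qval (k : qf) (v : 'rV[int]_(qdim k)) : int := lam v v + alph v.

(* adjoint lambda^ : H -> H^*, v |-> lambda(v, -), represented by the row vector v L *)
Definition adj (k : qf) (v : 'rV[int]_(qdim k)) : 'rV[int]_(qdim k) := v *m qlam k.
Definition qf_nondegenerate (k : qf) : Prop := injective (@adj k).
Definition qf_nonsingular (k : qf) : Prop := bijective (@adj k).

Definition qneg (k : qf) : qf := QF (- qlam k) (qalpha k).

(* restriction to the subgroup with Z-basis the rows of B *)
Definition restrict (k : qf) (m : nat) (B : 'M[int]_(m, qdim k)) : qf :=
  QF (B *m qlam k *m B^T) (qalpha k *m B^T).

Inductive qfamily := Fc | Fev | Fo.
Definition in_family (f : qfamily) (k : qf) : Prop :=
  match f with
  | Fc => forall v : 'rV[int]_(qdim k), (2 %| qval v)%Z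
  | Fev => forall v : 'rV[int]_(qdim k), (2 %| lam v v)%Z
  | Fo => (forall v : 'rV[int]_(qdim k), (2 %| lam v v)%Z) /\ qalpha k = 0
  end.

Definition subgroup n (S : 'rV[int]_n -> Prop) : Prop :=
  S 0 /\ forall v w, S v -> S w -> S (v - w).
Definition direct_summand n (S : 'rV[int]_n -> Prop) : Prop :=
  subgroup S /\ exists K : 'rV[int]_n -> Prop, subgroup K /\
    (forall v, exists s t, S s /\ K t /\ v = s + t) /\
    (forall v, S v -> K v -> v = 0).
Definition is_basis n m (B : 'M[int]_(m, n)) (S : 'rV[int]_n -> Prop) : Prop :=
  (forall v, S v <-> exists c : 'rV[int]_m, v = c *m B) /\
  injective (fun c : 'rV[int]_m => c *m B).

Definition perp (k : qf) (S : 'rV[int]_(qdim k) -> Prop) : 'rV[int]_(qdim k) -> Prop :=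
  fun v => forall v0, S v0 -> lam v v0 = 0.

(* cokernel of the adjoint: [x] = [y] *)
Definition cokeq (k : qf) (x y : 'rV[int]_(qdim k)) : Prop :=
  exists v, x - y = adj v.

(* lambda^{-1}(x,y) = y(v)/r where r x = lambda^(v); here r = det L, v = x adj(L) *)
Definition linv (k : qf) (x y : 'rV[int]_(qdim k)) : rat :=
  ((x *m \adj (qlam k) *m y^T) 0 0)%:~R / (\det (qlam k))%:~R.

(* q^*(kappa)([x]), as a rational representative of an element of Q/Z *)
Definition qlink (f : qfamily) (k : qf) (x : 'rV[int]_(qdim k)) : rat :=
  match f with
  | Fc => (linv x x + linv x (qalpha k)) / 2
  | _ => linv x x / 2
  end.

Definition eqQZ (p q : rat) : Prop := exists z : int, p - q = z%:~R.

(* theta : Cok lambda0^ -> Cok lambda1^, given by a map T on representatives *)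
Definition cok_isometry (f : qfamily) (k0 k1 : qf)
    (T : 'rV[int]_(qdim k0) -> 'rV[int]_(qdim k1)) : Prop :=
  (forall x y, cokeq x y -> cokeq (T x) (T y)) /\
      (forall x y, cokeq (T (x + y)) (T x + T y)) /\
      (forall x y, cokeq (T x) (T y) -> cokeq x y) /\
      (forall y, exists x, cokeq (T x) y) /\
      cokeq (T (qalpha k0)) (qalpha k1) /\
      (forall x, eqQZ (qlink f (T x)) (qlink f x)).

(* kappa0 \cup_theta kappa1^- : H' subset of H0^* (+) H1^* with lambda', alpha' *)
Definition glue_H (k0 k1 : qf) (T : 'rV[int]_(qdim k0) -> 'rV[int]_(qdim k1))
    (x0 : 'rV[int]_(qdim k0)) (x1 : 'rV[int]_(qdim k1)) : Prop :=
  cokeq (T x0) x1.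
Definition glue_lam (k0 k1 : qf) (x0 : 'rV[int]_(qdim k0)) (x1 : 'rV[int]_(qdim k1))
    (y0 : 'rV[int]_(qdim k0)) (y1 : 'rV[int]_(qdim k1)) : rat :=
  linv x0 y0 - linv x1 y1.
Definition glue_alpha (k0 k1 : qf) (x0 : 'rV[int]_(qdim k0)) (x1 : 'rV[int]_(qdim k1)) : rat :=
  glue_lam (qalpha k0) (qalpha k1) x0 x1.

Definition isometric_glue (k k0 k1 : qf) (T : 'rV[int]_(qdim k0) -> 'rV[int]_(qdim k1)) : Prop :=
  exists (phi0 : 'rV[int]_(qdim k) -> 'rV[int]_(qdim k0))
         (phi1 : 'rV[int]_(qdim k) -> 'rV[int]_(qdim k1)),
  (forall v w, phi0 (v + w) = phi0 v + phi0 w /\ phi1 (v + w) = phi1 v + phi1 w) /\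
      (forall v w, phi0 v = phi0 w -> phi1 v = phi1 w -> v = w) /\
      (forall v, glue_H T (phi0 v) (phi1 v)) /\
      (forall x0 x1, glue_H T x0 x1 -> exists v, phi0 v = x0 /\ phi1 v = x1) /\
      (forall v w, glue_lam (phi0 v) (phi1 v) (phi0 w) (phi1 w) = (lam v w)%:~R) /\
      (forall v, glue_alpha (phi0 v) (phi1 v) = (alph v)%:~R).

Arguments restrict k {m} B.
Arguments perp : clear implicits.
Arguments cok_isometry : clear implicits.
Arguments isometric_glue : clear implicits.

(* Main.v *)
Require Import Defs.
From HB Require Import structures.
From mathcomp Require Import all_boot all_order all_algebra.
From mathcomp Require Import ring.
Import Order.TTheory GRing.Theory Num.Theory.
Local Open Scope ring_scope.
Set Implicit Arguments. Unset Strict Implicit. Unset Printing Implicit Defensive.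
Lemma det_nz m (A : 'M[int]_m) :
  injective (fun c : 'rV[int]_m => c *m A) -> \det A != 0.
Proof.
move=> inj; apply/negP => /eqP d0.
have [L uL [R uR [d _ dM]]] := int_Smith_normal_form A.
set D := \matrix_(i, j) _ in dM.
have trD : is_trig_mx D.
  apply/is_trig_mxP => i j lt; rewrite mxE.
  by rewrite (ltn_eqF lt) /= mulr0n.
have: \det D = 0.
  move: d0; rewrite dM !det_mulmx => /eqP; rewrite !mulf_eq0 => /orP[/orP[]|] /eqP h //.
  - by move: uL; rewrite unitmxE h.
  - by move: uR; rewrite unitmxE h.
rewrite det_trig // => /eqP /prodf_eq0 [i _ /eqP Dii].
pose c : 'rV[int]_m := 'e_i *m invmx L.
have : c *m A = 0 *m A.
  rewrite mul0mx dM /c !mulmxA mulmxKV // -rowE.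
  have -> : row i D = 0.
    apply/rowP => j; rewrite !mxE; have [<-|ne] := eqVneq i j.
      by move: Dii; rewrite mxE.
    by have /negbTE -> : (i : nat) != j by []; rewrite mulr0n.
  by rewrite mul0mx.
move/inj => c0.
have : 'e_i = 0 :> 'rV[int]_m by rewrite -(mulmxKV uL 'e_i) -/c c0 mul0mx.
move/rowP/(_ i); rewrite !mxE. have -> : (i == i) = true by exact: eqxx. by [].
Qed.

Lemma scale_inj m n (d : int) (x : 'M[int]_(m, n)) : d != 0 -> d *: x = 0 -> x = 0.
Proof.
move=> dn /matrixP h; apply/matrixP => i j; move: (h i j); rewrite !mxE.
by move/eqP; rewrite mulf_eq0 (negbTE dn) /= => /eqP.
Qed.

Lemma rowmx_inj m n p (B : 'M[int]_(m, n)) (A A' : 'M[int]_(p, m)) :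
  injective (fun c : 'rV[int]_m => c *m B) -> A *m B = A' *m B -> A = A'.
Proof.
move=> inj h; apply/row_matrixP => i; apply: inj => /=.
by rewrite -!row_mul h.
Qed.

Lemma rv_ext n (y : 'rV[int]_n) : (forall w : 'rV[int]_n, w *m y^T = 0) -> y = 0.
Proof.
move=> h; apply/rowP => j; have := h 'e_j; rewrite -rowE => /rowP /(_ 0).
by rewrite !mxE.
Qed.

Lemma subgroup_add n (K : 'rV[int]_n -> Prop) x y :
  subgroup K -> K x -> K y -> K (x + y).
Proof.
move=> [K0 KB] Kx Ky; have := KB _ _ Kx (KB _ _ K0 Ky).
by rewrite sub0r opprK.
Qed.

Lemma subgroup_scale n (K : 'rV[int]_n -> Prop) (z : int) x :
  subgroup K -> K x -> K (z *: x).
Proof.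
move=> sK Kx; have [K0 KB] := sK.
have Kn : forall p : nat, K (x *+ p).
  by elim=> [|p IH]; rewrite ?mulr0n // mulrS; apply: subgroup_add.
rewrite -[z]intz scaler_int; case: z => p.
  exact: Kn.
by rewrite NegzE mulrNz -sub0r; apply: KB => //; exact: (Kn p.+1).
Qed.

Lemma subgroup_mul n m (K : 'rV[int]_n -> Prop) (M : 'M[int]_(m, n)) :
  subgroup K -> (forall i, K (row i M)) -> forall v, K (v *m M).
Proof.
move=> sK Kr v; rewrite mulmx_sum_row.
apply: (big_ind K); first by case: sK.
  by move=> x y; apply: subgroup_add.
by move=> i _; apply: subgroup_scale.
Qed.

Lemma ds_inv n m (S : 'rV[int]_n -> Prop) (B : 'M[int]_(m, n)) :
  direct_summand S -> is_basis B S -> exists P : 'M[int]_(n, m), B *m P = 1%:M.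
Proof.
move=> [sS [K [sK [dec tri]]]] [bas inj].
have : forall j : 'I_n, exists c : 'rV[int]_m, K ('e_j - c *m B).
  move=> j; have [s [t [Ss [Kt e]]]] := dec 'e_j.
  have [c sc] := (bas s).1 Ss; exists c.
  by rewrite e -sc addrAC subrr add0r.
case/fin_all_exists => cf hcf.
exists (\matrix_j cf j).
have KM : forall v, K (v *m (1%:M - (\matrix_j cf j) *m B)).
  apply: subgroup_mul => // j.
  by rewrite linearB /= row1 row_mul rowK.
have h : B = B *m (\matrix_j cf j) *m B.
  apply/row_matrixP => i.
  have SB : forall c, S (c *m B) by move=> c; apply/(bas _).2; exists c.
  have e0 : row i B - row i B *m ((\matrix_j cf j) *m B) = 0.
    rewrite -[X in X - _]mulmx1 -mulmxBr; apply: tri; last exact: KM.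
    rewrite mulmxBr mulmx1 mulmxA; case: sS => _ sB; apply: sB; rewrite ?rowE; apply: SB.
  by rewrite !row_mul -mulmxA; apply/eqP; rewrite -subr_eq0; apply/eqP.
apply: (rowmx_inj inj); by rewrite mul1mx -h.
Qed.

Lemma perpE (k : qf) (H0 : 'rV[int]_(qdim k) -> Prop) m0 (B0 : 'M[int]_(m0, qdim k)) v :
  is_basis B0 H0 -> perp k H0 v <-> v *m qlam k *m B0^T = 0.
Proof.
move=> [bas _]; split.
  move=> h; apply/rowP => i.
  have -> : (v *m qlam k *m B0^T) 0 i = lam v (row i B0).
    by rewrite /lam tr_row colE mulmxA -colE [RHS]mxE.
  rewrite [RHS]mxE; apply: h; apply/bas; exists 'e_i; by rewrite rowE.
move=> h v0 /bas [c ->]; rewrite /lam trmx_mul mulmxA h mul0mx mxE //.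
Qed.

Lemma linv_scale (k' : qf) (d : int) (x c y : 'rV[int]_(qdim k')) :
  \det (qlam k') != 0 -> d *: x = c *m qlam k' ->
  d%:~R * linv x y = ((c *m y^T) 0 0)%:~R :> rat.
Proof.
move=> dn e; rewrite /linv mulrA -intrM.
have -> : d * (x *m \adj (qlam k') *m y^T) 0 0 = \det (qlam k') * (c *m y^T) 0 0.
  transitivity ((d *: (x *m \adj (qlam k') *m y^T)) 0 0); first by rewrite [RHS]mxE.
  rewrite !scalemxAl e -(mulmxA c) mul_mx_adj mul_mx_scalar.
  by rewrite -scalemxAl mxE.
by rewrite intrM mulrAC divff ?mul1r // intr_eq0.
Qed.

Lemma linv_sym (k' : qf) (x y : 'rV[int]_(qdim k')) :
  (qlam k')^T = qlam k' -> linv x y = linv y x.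
Proof.
move=> s; rewrite /linv; congr (_%:~R / _).
transitivity (((x *m \adj (qlam k') *m y^T)^T) 0 0); first by rewrite [RHS]mxE.
by rewrite !trmx_mul trmxK trmx_adj s mulmxA.
Qed.

Lemma lam_restrict (k : qf) m (B : 'M[int]_(m, qdim k)) c d :
  lam (k := restrict k B) c d = lam (c *m B) (d *m B).
Proof. by rewrite /lam /= trmx_mul !mulmxA. Qed.

Lemma alph_restrict (k : qf) m (B : 'M[int]_(m, qdim k)) c :
  alph (k := restrict k B) c = alph (c *m B).
Proof. by rewrite /alph /= trmx_mul trmxK mulmxA. Qed.

Lemma lam_qneg (k : qf) c d : lam (k := qneg k) c d = - lam (k := k) c d.
Proof. by rewrite /lam /= mulmxN mulNmx mxE. Qed.

Lemma alph_qneg (k : qf) c : alph (k := qneg k) c = alph (k := k) c.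
Proof. by []. Qed.

Lemma dvd2_neg (a b : int) : (2 %| a + b)%Z -> (2 %| - a + b)%Z.
Proof.
move=> h; have -> : - a + b = (a + b) - a * 2 by ring.
by rewrite rpredB // dvdz_mull.
Qed.

Lemma final_c (d X Y A0 A1 ax by' p q s t l au j : rat) : d != 0 ->
  d * X = ax -> d * ax = p -> d * Y = by' -> d * by' = q -> d * A0 = s -> d * A1 = t ->
  d * d * l = p - q -> d * au = s - t -> l + au = j * 2 ->
  (Y + A1) / 2 - (X + A0) / 2 = - j.
Proof.
move=> dn hX hax hY hby hA0 hA1 hl hau hj.
have eX : X = ax / d by rewrite -hX mulrC (mulKf dn).
have eY : Y = by' / d by rewrite -hY mulrC (mulKf dn).
have eA0 : A0 = s / d by rewrite -hA0 mulrC (mulKf dn).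
have eA1 : A1 = t / d by rewrite -hA1 mulrC (mulKf dn).
have eax : ax = p / d by rewrite -hax mulrC (mulKf dn).
have eby : by' = q / d by rewrite -hby mulrC (mulKf dn).
have ep : p = d * d * l + q by rewrite hl subrK.
have es : s = d * au + t by rewrite hau subrK.
have el : l = j * 2 - au by rewrite -hj addrK.
rewrite eX eY eA0 eA1 eax eby ep es el.
by field.
Qed.

Lemma final_ev (d X Y ax by' p q l j : rat) : d != 0 ->
  d * X = ax -> d * ax = p -> d * Y = by' -> d * by' = q ->
  d * d * l = p - q -> l = j * 2 ->
  Y / 2 - X / 2 = - j.
Proof.
move=> dn hX hax hY hby hl hj.
have eX : X = ax / d by rewrite -hX mulrC (mulKf dn).
have eY : Y = by' / d by rewrite -hY mulrC (mulKf dn).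
have eax : ax = p / d by rewrite -hax mulrC (mulKf dn).
have eby : by' = q / d by rewrite -hby mulrC (mulKf dn).
have ep : p = d * d * l + q by rewrite hl subrK.
rewrite eX eY eax eby ep hj.
by field.
Qed.
Theorem lemma1p4 (f : qfamily) (k : qf) (H0 : 'rV[int]_(qdim k) -> Prop)
    (m0 : nat) (B0 : 'M[int]_(m0, qdim k)) :
  is_qf k -> in_family f k -> qf_nonsingular k ->
  direct_summand H0 -> is_basis B0 H0 ->
  qf_nondegenerate (restrict k B0) ->
  direct_summand (perp k H0) /\
  forall (m1 : nat) (B1 : 'M[int]_(m1, qdim k)), is_basis B1 (perp k H0) ->
    let k0 := restrict k B0 in
    let k1 := qneg (restrict k B1) in
    [/\ qf_nondegenerate k0, in_family f k0, qf_nondegenerate k1, in_family f k1 &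
      exists T : 'rV[int]_m0 -> 'rV[int]_m1,
        cok_isometry f k0 k1 T /\ isometric_glue k k0 k1 T].
Proof.
move=> hsym hfam [g gK Kg] hds0 hb0 nd0.
pose Li := \matrix_(i < qdim k) g (row i 1%:M).
have LiL : Li *m qlam k = 1%:M.
  by apply/row_matrixP => i; rewrite row_mul rowK row1; apply: Kg.
have LLi : qlam k *m Li = 1%:M by apply: mulmx1C.
have [P BP] := ds_inv hds0 hb0.
have PB : P^T *m B0^T = 1%:M by rewrite -trmx_mul BP trmx1.
have [bas0 inj0] := hb0.
pose L0 := B0 *m qlam k *m B0^T.
have dn0 : \det L0 != 0 by apply: det_nz; exact: nd0.
pose d0 := \det L0.
have pE : forall v, perp k H0 v <-> v *m qlam k *m B0^T = 0 := fun v => perpE v hb0.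
have sp : subgroup (perp k H0).
  split; first by apply/pE; rewrite !mul0mx.
  by move=> v w /pE hv /pE hw; apply/pE; rewrite !mulmxBl hv hw subrr.
have ds1 : direct_summand (perp k H0).
  split=> //.
  exists (fun v => exists x : 'rV_m0, v = x *m P^T *m Li).
  split; [split|split].
  - by exists 0; rewrite !mul0mx.
  - by move=> v w [x ->] [y ->]; exists (x - y); rewrite !mulmxBl.
  - move=> v; exists (v - v *m qlam k *m B0^T *m P^T *m Li), (v *m qlam k *m B0^T *m P^T *m Li).
    split; last by split; [exists (v *m qlam k *m B0^T) | rewrite subrK].
    apply/pE; rewrite mulmxBl mulmxBl -[X in _ - X]mulmxA -[X in _ - X]mulmxA.
    by rewrite (mulmxA Li) LiL mul1mx -(mulmxA _ P^T) PB mulmx1 subrr.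
  - move=> v /pE h [x e]; move: h; rewrite e -(mulmxA _ Li) LiL mulmx1 -mulmxA PB mulmx1 => ->.
    by rewrite !mul0mx.
split=> // m1 B1 hb1 k0 k1.
have [bas1 inj1] := hb1.
have F3 : B1 *m qlam k *m B0^T = 0.
  apply/row_matrixP => i; rewrite row0 !row_mul; apply/pE; apply/bas1.
  by exists 'e_i; rewrite rowE.
have F3' : B0 *m qlam k *m B1^T = 0.
  by have := congr1 trmx F3; rewrite !trmx_mul trmxK hsym trmx0 mulmxA.
pose L1 := B1 *m qlam k *m B1^T.
have D : forall u : 'rV[int]_(qdim k), exists b : 'rV[int]_m1, d0 *: u = (u *m qlam k *m B0^T *m \adj L0) *m B0 + b *m B1.
  move=> u.
  have : perp k H0 (d0 *: u - (u *m qlam k *m B0^T *m \adj L0) *m B0).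
    apply/pE; rewrite !mulmxBl -!scalemxAl.
    have -> : u *m qlam k *m B0^T *m \adj L0 *m B0 *m qlam k *m B0^T = (u *m qlam k *m B0^T) *m (\adj L0 *m L0) by rewrite /L0 !mulmxA.
    by rewrite mul_adj_mx mul_mx_scalar subrr.
  by case/bas1 => b e; exists b; rewrite -e addrC subrK.
have G : forall z : 'rV[int]_(qdim k), z *m B0^T = 0 -> exists e : 'rV[int]_m1, z *m B1^T = e *m (- L1).
  move=> z hz.
  have : perp k H0 (z *m Li) by apply/pE; rewrite -(mulmxA z) LiL mulmx1.
  case/bas1 => e he; exists (- e).
  rewrite mulNmx mulmxN opprK -{1}[z]mulmx1 -LiL mulmxA he /L1 !mulmxA //.
have NK1 : injective (fun c : 'rV_m1 => c *m (- L1)).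
  move=> c c' /= h.
  have h1 : (c - c') *m L1 = 0.
    by move: h; rewrite !mulmxN => /oppr_inj h; rewrite mulmxBl h subrr.
  pose v := (c - c') *m B1.
  have vp : v *m qlam k *m B0^T = 0 by rewrite /v -!mulmxA (mulmxA B1) F3 mulmx0.
  have e0 : B0 *m (v *m qlam k)^T = 0 by rewrite -[B0]trmxK -trmx_mul vp trmx0.
  have e1 : B1 *m (v *m qlam k)^T = 0.
    rewrite -[B1]trmxK -trmx_mul /v.
    have -> : (c - c') *m B1 *m qlam k *m B1^T = (c - c') *m L1 by rewrite /L1 !mulmxA.
    by rewrite h1 trmx0.
  have y0 : v *m qlam k = 0.
    apply: rv_ext => w; have [b e] := D w.
    apply: (scale_inj dn0); rewrite scalemxAl e mulmxDl -(mulmxA _ B0) e0.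
    by rewrite -(mulmxA _ B1) e1 !mulmx0 addr0.
  have : v = 0 by rewrite -[v]mulmx1 -LLi mulmxA y0 mul0mx.
  rewrite /v => /eqP; rewrite -(mul0mx _ B1) => /eqP /inj1 /eqP.
  by rewrite subr_eq0 => /eqP.
have fam0 : in_family f k0.
  rewrite /k0; case: f hfam => /=.
  - by move=> h c; rewrite /qval lam_restrict alph_restrict; exact: h.
  - by move=> h c; rewrite lam_restrict; exact: h.
  - case=> h ha; split; first by move=> c; rewrite lam_restrict; exact: h.
    by rewrite ha mul0mx.
have fam1 : in_family f k1.
  rewrite /k1; clear fam0; case: f hfam => /=.
  - move=> h c; rewrite /qval lam_qneg alph_qneg lam_restrict alph_restrict.
    by apply: dvd2_neg; exact: h.
  - by move=> h c; rewrite lam_qneg lam_restrict rpredN; exact: h.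
  - case=> h ha; split; first by move=> c; rewrite lam_qneg lam_restrict rpredN; exact: h.
    by rewrite ha mul0mx.
split=> //.
have [P1 BP1] := ds_inv ds1 hb1.
pose T := fun x : 'rV[int]_m0 => x *m (P^T *m B1^T).
have TG : forall z : 'rV[int]_(qdim k), cokeq (k := k1) (T (z *m B0^T)) (z *m B1^T).
  move=> z; have hz : (z *m B0^T *m P^T - z) *m B0^T = 0.
    by rewrite mulmxBl -(mulmxA _ P^T) PB mulmx1 subrr.
  have [e he] := G _ hz.
  by exists e; rewrite /adj /= -/L1 -he mulmxBl /T mulmxA.
have hs0 : (qlam k0)^T = qlam k0.
  by rewrite /k0 /= !trmx_mul trmxK hsym mulmxA.
have hs1 : (qlam k1)^T = qlam k1.
  by rewrite /k1 /= linearN /= !trmx_mul trmxK hsym mulmxA.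
have dn0' : \det (qlam k0) != 0 by [].
have dn1 : \det (qlam k1) != 0 by apply: det_nz; exact: NK1.
have S0 : forall v : 'rV[int]_(qdim k), exists a : 'rV[int]_m0, exists b : 'rV[int]_m1,
  [/\ d0 *: (v *m qlam k *m B0^T) = a *m qlam k0, d0 *: (v *m qlam k *m B1^T) = b *m qlam k1
    & d0 *: v = a *m B0 - b *m B1].
  move=> v; have [b hb] := D v; set a := (v *m qlam k *m B0^T *m \adj L0) in hb.
  exists a, (-b); split.
  - rewrite !scalemxAl hb !mulmxDl -[b *m B1 *m qlam k]mulmxA -[b *m (B1 *m qlam k) *m B0^T]mulmxA.
    by rewrite F3 mulmx0 addr0 /k0 /= !mulmxA.
  - rewrite !scalemxAl hb !mulmxDl -[a *m B0 *m qlam k]mulmxA -[a *m (B0 *m qlam k) *m B1^T]mulmxA.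
    by rewrite F3' mulmx0 add0r /k1 /= mulmxN mulNmx opprK !mulmxA.
  - by rewrite hb mulNmx opprK.
have d0q : (d0%:~R : rat) != 0 by rewrite intr_eq0.
have ent : forall M N : 'M[int]_1, M 0 0 - N 0 0 = (M - N) 0 0 by move=> M N; rewrite !mxE.
exists T; split.
  split; [|split; [|split; [|split; [|split]]]].
  - move=> x y [c e].
    have hz : ((x - y) *m P^T - c *m B0 *m qlam k) *m B0^T = 0.
      rewrite mulmxBl -(mulmxA _ P^T) PB mulmx1 e /adj /=.
      by rewrite !mulmxA subrr.
    have [e' he'] := G _ hz.
    exists e'; rewrite /adj /= -/L1 -he' mulmxBl.
    have -> : c *m B0 *m qlam k *m B1^T = 0 by rewrite -!(mulmxA c) F3' mulmx0.
    by rewrite subr0 /T !mulmxBl !mulmxA.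
  - by move=> x y; exists 0; rewrite /T mulmxDl subrr /adj mul0mx.
  - move=> x y [e he].
    pose w := x - y.
    pose u := (w *m P^T + e *m B1 *m qlam k) *m Li.
    have uL : u *m qlam k = w *m P^T + e *m B1 *m qlam k by rewrite /u -mulmxA LiL mulmx1.
    have hu0 : u *m qlam k *m B0^T = w.
      by rewrite uL mulmxDl -(mulmxA w) PB mulmx1 -!(mulmxA e) F3 mulmx0 addr0.
    have hu1 : u *m qlam k *m B1^T = 0.
      rewrite uL mulmxDl -[w *m P^T *m B1^T]mulmxA mulmxBl.
      move: he; rewrite /adj /= /T -mulmxBl => ->.
      by rewrite mulmxN !mulmxA addNr.
    clearbody u; have [b hb] := D u.
    have b0 : b = 0.
      apply: NK1 => /=; rewrite mul0mx mulmxN; apply/eqP; rewrite oppr_eq0; apply/eqP.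
      have := congr1 (fun M => M *m (qlam k *m B1^T)) hb => /=.
      rewrite -scalemxAl mulmxA hu1 scaler0 mulmxDl -!(mulmxA _ B0) (mulmxA B0) F3' mulmx0 add0r.
      by move=> ->; rewrite /L1 !mulmxA.
    rewrite b0 mul0mx addr0 in hb.
    have uB : u = u *m P *m B0.
      apply/eqP; rewrite -subr_eq0; apply/eqP; apply: (scale_inj dn0).
      by rewrite scalerBr !scalemxAl -/d0 hb -[_ *m B0 *m P]mulmxA BP mulmx1 subrr.
    exists (u *m P); rewrite /adj /= -/w -hu0 [in LHS]uB !mulmxA //.
  - move=> y; exists (y *m P1^T *m B0^T).
    by have := TG (y *m P1^T); rewrite -[y *m P1^T *m B1^T]mulmxA -trmx_mul BP1 trmx1 mulmx1.
  - have := TG (qalpha k); rewrite //.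
  - move=> x.
    pose u := x *m P^T *m Li.
    have uL : u *m qlam k = x *m P^T by rewrite /u -mulmxA LiL mulmx1.
    clearbody u.
    have [a [b [ha00 hb00 huv]]] := S0 u.
    have p0 : u *m qlam k *m B0^T = x by rewrite uL -mulmxA PB mulmx1.
    have p1 : u *m qlam k *m B1^T = T x by rewrite uL /T mulmxA.
    have ha := ha00; have hb := hb00.
    rewrite p0 in ha; rewrite p1 in hb.
    have hX := @linv_scale k0 d0 x a x dn0' ha.
    have hY := @linv_scale k1 d0 (T x) b (T x) dn1 hb.
    have hA0 := @linv_scale k0 d0 x a (qalpha k0) dn0' ha.
    have hA1 := @linv_scale k1 d0 (T x) b (qalpha k1) dn1 hb.
    have hax : d0 * (a *m x^T) 0 0 = (a *m qlam k0 *m a^T) 0 0.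
      transitivity ((a *m (d0 *: x)^T) 0 0); first by rewrite linearZ /= -scalemxAr [RHS]mxE.
      by rewrite ha trmx_mul hs0 mulmxA.
    have hby : d0 * (b *m (T x)^T) 0 0 = (b *m qlam k1 *m b^T) 0 0.
      transitivity ((b *m (d0 *: T x)^T) 0 0); first by rewrite linearZ /= -scalemxAr [RHS]mxE.
      by rewrite hb trmx_mul hs1 mulmxA.
    have hl : d0 * d0 * lam u u = (a *m qlam k0 *m a^T) 0 0 - (b *m qlam k1 *m b^T) 0 0.
      transitivity (((d0 *: u) *m qlam k *m (d0 *: u)^T) 0 0).
        by rewrite /lam linearZ /= -scalemxAr -!scalemxAl !mxE mulrA.
      have ha' : d0 *: u *m qlam k *m B0^T = a *m qlam k0 by rewrite -!scalemxAl.
      have hb' : d0 *: u *m qlam k *m B1^T = b *m qlam k1 by rewrite -!scalemxAl.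
      rewrite ent {2}huv linearB /= !trmx_mul mulmxBr !mulmxA ha' hb'.
      by rewrite /k0 /k1 /= !mulmxA.
    have hau : d0 * alph u = (a *m (qalpha k0)^T) 0 0 - (b *m (qalpha k1)^T) 0 0.
      transitivity (((d0 *: u) *m (qalpha k)^T) 0 0).
        by rewrite /alph -scalemxAl [RHS]mxE.
      by rewrite ent huv mulmxBl /k0 /k1 /= !trmx_mul !trmxK !mulmxA.
    have qax : d0%:~R * ((a *m x^T) 0 0)%:~R = ((a *m qlam k0 *m a^T) 0 0)%:~R :> rat.
      by rewrite -intrM hax.
    have qby : d0%:~R * ((b *m (T x)^T) 0 0)%:~R = ((b *m qlam k1 *m b^T) 0 0)%:~R :> rat.
      by rewrite -intrM hby.
    have ql : d0%:~R * d0%:~R * (lam u u)%:~R = ((a *m qlam k0 *m a^T) 0 0)%:~R - ((b *m qlam k1 *m b^T) 0 0)%:~R :> rat.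
      by rewrite -!intrM -intrB hl.
    have qau : d0%:~R * (alph u)%:~R = ((a *m (qalpha k0)^T) 0 0)%:~R - ((b *m (qalpha k1)^T) 0 0)%:~R :> rat.
      by rewrite -!intrM -intrB hau.
    clear fam0 fam1; case: f hfam => /=.
    + move=> /(_ u) /dvdzP [j hj]; exists (- j); rewrite intrN.
      apply: (final_c d0q hX qax hY qby hA0 hA1 ql qau).
      by rewrite -intrD -[lam u u + alph u]/(qval u) hj intrM.
    + move=> /(_ u) /dvdzP [j hj]; exists (- j); rewrite intrN.
      apply: (final_ev d0q hX qax hY qby ql).
      by rewrite hj intrM.
    + move=> [/(_ u) /dvdzP [j hj] _]; exists (- j); rewrite intrN.
      apply: (final_ev d0q hX qax hY qby ql).
      by rewrite hj intrM.
exists (fun v => v *m qlam k *m B0^T), (fun v => v *m qlam k *m B1^T).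
split; [|split; [|split; [|split; [|split]]]].
- by move=> v w; rewrite !mulmxDl.
- move=> v w /= h0 h1.
  have : perp k H0 (v - w) by apply/pE; rewrite !mulmxBl h0 subrr.
  case/bas1 => c hc.
  have : c *m (- L1) = 0 *m (- L1).
    rewrite mul0mx mulmxN; apply/eqP; rewrite oppr_eq0; apply/eqP.
    by rewrite /L1 !mulmxA -hc !mulmxBl h1 subrr.
  by move/NK1 => c0; apply/eqP; rewrite -subr_eq0 hc c0 mul0mx.
- move=> v; exact: (TG (v *m qlam k)).
- move=> x0 x1 [e he].
  exists ((x0 *m P^T + e *m B1 *m qlam k) *m Li).
  have zL : (x0 *m P^T + e *m B1 *m qlam k) *m Li *m qlam k = x0 *m P^T + e *m B1 *m qlam k.
    by rewrite -mulmxA LiL mulmx1.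
  have hx1 : x1 = T x0 - adj (k := k1) e by rewrite -he opprB addrC subrK.
  split.
    by rewrite zL mulmxDl -(mulmxA x0) PB mulmx1 -!(mulmxA e) F3 mulmx0 addr0.
  rewrite zL mulmxDl hx1 /adj /T /k1 /= mulmxN opprK !mulmxA //.
- move=> v w; have [a [b [ha hb huv]]] := S0 v.
  rewrite /glue_lam; apply: (mulfI d0q).
  rewrite mulrBr (@linv_scale k0 d0 _ a (w *m qlam k *m B0^T) dn0' ha).
  rewrite (@linv_scale k1 d0 _ b (w *m qlam k *m B1^T) dn1 hb).
  rewrite -intrB -intrM; congr (_%:~R); rewrite ent.
  have -> : d0 * lam v w = ((d0 *: v) *m qlam k *m w^T) 0 0 by rewrite /lam -!scalemxAl [RHS]mxE.
  by rewrite huv !trmx_mul !trmxK hsym !mulmxBl !mulmxA.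
- move=> v; have [a [b [ha hb huv]]] := S0 v.
  rewrite /glue_alpha /glue_lam (@linv_sym k0 (qalpha k0)) // (@linv_sym k1 (qalpha k1)) //.
  apply: (mulfI d0q).
  rewrite mulrBr (@linv_scale k0 d0 _ a (qalpha k0) dn0' ha).
  rewrite (@linv_scale k1 d0 _ b (qalpha k1) dn1 hb).
  rewrite -intrB -intrM; congr (_%:~R); rewrite ent.
  have -> : d0 * alph v = ((d0 *: v) *m (qalpha k)^T) 0 0 by rewrite /alph -!scalemxAl [RHS]mxE.
  by rewrite huv /k0 /k1 /= !trmx_mul !trmxK !mulmxBl !mulmxA.
Qed.
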